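(* Let $c\ge 1$ and $d\ge 1$ be integers with $f=d/(2c)\le 1$, and set $\nu=\lfloor\sqrt{2/f}\rfloor$ if $\lfloor\sqrt{2/f}\rfloor\ge 2$, and $\nu=2$ otherwise. Then a single ring on the cycle $C_\nu$ with capacity $c$ on every edge can carry uniform traffic of $d$ units between every pair of its $\nu$ vertices; that is, there exist nonnegative integers $t^0_{jk},t^1_{jk}$ for $1\le j<k\le\nu$ with $t^0_{jk}+t^1_{jk}=d$, where $t^0_{jk}$ and $t^1_{jk}$ are routed on the two arcs of $C_\nu$ between $j$ and $k$, such that for every edge of $C_\nu$ the total traffic on arcs containing that edge is at most $c$.
   Context: $C_\nu$ denotes the cycle graph on vertices $1,\dots,\nu$ in cyclic order (edges $\{l,l+1\}$ for $1\le l<\nu$ and $\{\nu,1\}$; for $\nu=2$ it has two parallel edges, so that the two arcs between vertices $1$ and $2$ are distinct edges). *)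

(* Defs.v *)
From mathcomp Require Import all_boot.
Set Implicit Arguments. Unset Strict Implicit. Unset Printing Implicit Defensive.

(* Cycle C_nu, vertices 0..nu-1 (paper's 1..nu shifted by one).
   Edge l (0 <= l < nu) joins l and (l+1) mod nu; for nu = 2 edges 0 and 1
   are the two distinct parallel edges between vertices 0 and 1.
   For a pair j < k, arc 0 between j and k is the path j, j+1, ..., k,
   i.e. it uses exactly the edges l with j <= l < k; arc 1 is the
   complementary path k, k+1, ..., nu-1, 0, ..., j, using the other edges. *)
Definition on_arc0 (j k l : nat) : bool := (j <= l) && (l < k).

Definition edge_load (nu : nat) (t0 t1 : nat -> nat -> nat) (l : nat) : nat :=
  \sum_(0 <= k < nu) \sum_(0 <= j < k)
     (if on_arc0 j k l then t0 j k else t1 j k).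

(* m is floor(sqrt(2/f)) where f = d/(2c), i.e. floor(sqrt(4c/d)):
   m^2 <= 4c/d < (m+1)^2. *)
Definition is_floor_sqrt_2_over_f (c d m : nat) : Prop :=
  m ^ 2 * d <= 4 * c < m.+1 ^ 2 * d.

Definition ring_size (m : nat) : nat := if 2 <= m then m else 2.

(* Main.v *)
Require Import Defs.
From mathcomp Require Import all_boot.
From mathcomp Require Import zify.

Lemma inner_sum (l k d : nat) :
  \sum_(0 <= j < k) (if j <= l then d else 0) = minn k l.+1 * d.
Proof.
elim: k => [|k IH]; first by rewrite big_nil.
rewrite big_nat_recr //= IH.
case: (leqP k l) => H.
- have -> : minn k.+1 l.+1 = k.+1 by lia.
  have -> : minn k l.+1 = k by lia.
  rewrite mulSn; lia.
- have -> : minn k.+1 l.+1 = l.+1 by lia.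
  have -> : minn k l.+1 = l.+1 by lia.
  rewrite addn0 //.
Qed.

Lemma outer_sum (l m e : nat) :
  \sum_(0 <= k < m) (if l < k then e else 0) = (m - l.+1) * e.
Proof.
elim: m => [|m IH]; first by rewrite big_nil.
rewrite big_nat_recr //= IH.
case: (ltnP l m) => H.
- have -> : m.+1 - l.+1 = (m - l.+1).+1 by lia.
  by rewrite mulSn addnC.
- have -> : m.+1 - l.+1 = 0 by lia.
  have -> : m - l.+1 = 0 by lia.
  by [].
Qed.

Lemma load_arc0 (m d l : nat) :
  edge_load m (fun _ _ => d) (fun _ _ => 0) l = (m - l.+1) * (l.+1 * d).
Proof.
rewrite /edge_load -outer_sum.
apply: eq_bigr => k _.
case: (ltnP l k) => H.
- rewrite -(_ : minn k l.+1 = l.+1); last by lia.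
  rewrite -inner_sum; apply: eq_bigr => j _.
  by rewrite /on_arc0 H andbT.
- rewrite big1 // => j _; rewrite /on_arc0.
  by case: ifP => //; lia.
Qed.

Lemma amgm a b : a * b * 4 <= (a + b) ^ 2.
Proof.
rewrite sqrnD.
case: (leqP a b) => H.
- have -> : b = a + (b - a) by lia.
  set x := b - a. nia.
- have -> : a = b + (a - b) by lia.
  set x := a - b. nia.
Qed.

Theorem lemma1 (c d m : nat) :
  1 <= c -> 1 <= d -> d <= 2 * c ->
  is_floor_sqrt_2_over_f c d m ->
  exists t0 t1 : nat -> nat -> nat,
    (forall j k, j < k < ring_size m -> t0 j k + t1 j k = d) /\
    (forall l, l < ring_size m -> edge_load (ring_size m) t0 t1 l <= c).
Proof.
move=> c1 d1 dc; rewrite /is_floor_sqrt_2_over_f /ring_size => /andP [Hm _].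
case: (leqP 2 m) => H2.
- exists (fun _ _ => d), (fun _ _ => 0); split.
    by move=> j k _; rewrite addn0.
  move=> l Hl; rewrite load_arc0.
  have : (m - l.+1) * l.+1 * 4 <= m ^ 2.
    have E : m = (m - l.+1) + l.+1 by lia.
    rewrite {2}E; exact: amgm.
  nia.
- exists (fun _ _ => d - d./2), (fun _ _ => d./2); split.
    by move=> j k _; lia.
  move=> l Hl.
  rewrite /edge_load !big_nat_recr //= !big_nil /= /on_arc0.
  case: l Hl => [|[|l]] //= _; lia.
Qed.
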